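(* Let $k\ge 1$, $d\in\mathbb{N}$ and $\alpha=(\alpha_1,\dots,\alpha_k)\in\mathbb{N}^k$ with $\alpha_1+\dots+\alpha_k=2d$. Then for every finite simple undirected graph, $$w_{\alpha_1}\cdots w_{\alpha_k}\le w_0^{k-1}\,w_{2d}.$$
   Context: $\mathbb{N}$ denotes the nonnegative integers. For $j\in\mathbb{N}$, $w_j$ denotes the total number of walks of length $j$ in the graph (a walk is a sequence of vertices in which consecutive vertices are adjacent; vertices and edges may repeat; the length is the number of edges); in particular $w_0$ is the number of vertices. *)

(* Defs.v *)
From mathcomp Require Import all_boot.
Set Implicit Arguments. Unset Strict Implicit. Unset Printing Implicit Defensive.

Definition simple_graph (T : finType) (e : rel T) : Prop :=
  symmetric e /\ irreflexive e.

Definition walks (T : finType) (e : rel T) (j : nat) : {set (j.+1).-tuple T} :=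
  [set t : (j.+1).-tuple T | path e (thead t) (behead t)].

Definition w (T : finType) (e : rel T) (j : nat) : nat := #|walks e j|.

(* Main.v *)
Require Import Defs.
From mathcomp Require Import all_boot.
From mathcomp Require Import zify.
Set Implicit Arguments. Unset Strict Implicit. Unset Printing Implicit Defensive.

Lemma sum_tupleS (T : finType) n (F : n.+1.-tuple T -> nat) :
  \sum_(t : n.+1.-tuple T) F t = \sum_(x : T) \sum_(t : n.-tuple T) F [tuple of x :: t].
Proof.
rewrite pair_big /=.
rewrite (reindex (fun p : T * n.-tuple T => [tuple of p.1 :: p.2])) /=; first by [].
exists (fun t : n.+1.-tuple T => (thead t, [tuple of behead t])) => [[x t] _|t _].
  by congr pair; try apply: val_inj.
by rewrite [in RHS](tuple_eta t).
Qed.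

Definition Aop (T : finType) (e : rel T) (f : T -> nat) (v : T) : nat :=
  \sum_u e v u * f u.
Definition X (T : finType) (e : rel T) (j : nat) : T -> nat :=
  iter j (Aop e) (fun _ => 1).

Lemma w_X (T : finType) (e : rel T) j : w e j = \sum_v X e j v.
Proof.
have W0 : forall v, \sum_(t : 0.-tuple T) (path e v t : nat) = X e 0 v.
  move=> v; rewrite (eq_bigr (fun _ => 1)); last by move=> t _; rewrite tuple0.
  by rewrite sum1_card card_tuple.
have WS : forall j v, \sum_(t : j.+1.-tuple T) (path e v t : nat) =
     \sum_u e v u * \sum_(t : j.-tuple T) (path e u t : nat).
  move=> i v; rewrite sum_tupleS; apply: eq_bigr => u _; rewrite big_distrr /=.
  apply: eq_bigr => t _ /=. case: (e v u); by rewrite /= ?mul1n ?mul0n.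
have WX : forall j v, \sum_(t : j.-tuple T) (path e v t : nat) = X e j v.
  elim=> [|i IH] v; first exact: W0.
  rewrite WS /X /= /Aop; apply: eq_bigr => u _; by rewrite IH.
rewrite /w -sum1_card big_mkcond sum_tupleS; apply: eq_bigr => v _.
rewrite -WX; apply: eq_bigr => t _; rewrite inE theadE /=.
by case: path.
Qed.

Lemma Aop_sym (T : finType) (e : rel T) (sym : symmetric e) f g :
  \sum_v Aop e f v * g v = \sum_v f v * Aop e g v.
Proof.
rewrite /Aop.
under eq_bigr do rewrite big_distrl.
under [RHS]eq_bigr do rewrite big_distrr.
rewrite exchange_big; apply: eq_bigr => x _; apply: eq_bigr => y _ /=.
by rewrite (sym y x) mulnCA mulnA.
Qed.

Lemma Aiter_sym (T : finType) (e : rel T) (sym : symmetric e) a : forall f g,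
  \sum_v iter a (Aop e) f v * g v = \sum_v f v * iter a (Aop e) g v.
Proof.
elim: a => [//|a IH] f g; rewrite iterS.
rewrite (Aop_sym sym) IH; apply: eq_bigr => v _; by rewrite iterSr.
Qed.

Lemma w_add (T : finType) (e : rel T) (sym : symmetric e) a b :
  w e (a + b) = \sum_v X e a v * X e b v.
Proof.
rewrite w_X /X.
transitivity (\sum_(v : T) iter a (Aop e) (iter b (Aop e) (fun _ => 1)) v * 1).
  by apply: eq_bigr => v _; rewrite muln1 iterD.
by rewrite (Aiter_sym sym); apply: eq_bigr => v _; rewrite mulnC.
Qed.

Lemma CS (T : finType) (f g : T -> nat) :
  (\sum_v f v * g v) ^ 2 <= (\sum_v f v ^ 2) * (\sum_v g v ^ 2).
Proof.
rewrite -(leq_pmul2l (isT : 0 < 2)).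
have E1 : (\sum_v f v * g v) ^ 2 = \sum_u \sum_v (f u * g v) * (f v * g u).
  rewrite (_ : forall x, x ^ 2 = x * x); last by move=> x; rewrite expnS expn1.
  rewrite big_distrl; apply: eq_bigr => u _; rewrite big_distrr.
  by apply: eq_bigr => v _ /=; rewrite mulnACA [RHS]mulnACA [g v * _]mulnC.
have E2 : (\sum_v f v ^ 2) * (\sum_v g v ^ 2) = \sum_u \sum_v (f u * g v) ^ 2.
  rewrite big_distrl; apply: eq_bigr => u _; rewrite big_distrr.
  by apply: eq_bigr => v _; rewrite expnMn.
have E3 : (\sum_v f v ^ 2) * (\sum_v g v ^ 2) = \sum_u \sum_v (f v * g u) ^ 2.
  rewrite mulnC big_distrl; apply: eq_bigr => u _; rewrite big_distrr.
  by apply: eq_bigr => v _; rewrite expnMn mulnC.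
rewrite E1 !mul2n -!addnn; rewrite [X in _ <= X + _]E2 E3 -big_split -[X in _ <= X]big_split /=.
apply: leq_sum => u _; rewrite -big_split -[X in _ <= X]big_split /=.
apply: leq_sum => v _; rewrite addnn -mul2n; exact: (nat_Cauchy _ _).1.
Qed.

Lemma Ex (f : nat -> nat) (pos : forall m, 0 < f m)
  (H : forall m, f m.+1 ^ 2 <= f m * f m.+2) :
  forall c a, f a.+1 * f (a + c).+1 <= f a * f (a + c).+2.
Proof.
elim=> [|c IH] a; first by rewrite addn0; move: (H a); rewrite expnS expn1.
have h1 := IH a; have h2 := H (a + c).+1.
rewrite addnS.
have P : 0 < f (a + c).+1 * f (a + c).+2 by rewrite muln_gt0 !pos.
rewrite -(leq_pmul2r P).
move: h1 h2 P; rewrite expnS expn1.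
move: (f a.+1) (f a) (f (a + c).+1) (f (a+c).+2) (f (a+c).+3) => x0 x1 x2 x3 x4.
nia.
Qed.

Lemma chain4 (A B P Q c d : nat) : A * P <= c * Q -> c * B <= d * A ->
  A * (B * P) <= d * (A * Q).
Proof.
move=> h1 h2.
apply: (@leq_trans (c * Q * B)).
  by rewrite (mulnCA A B P) (mulnC B) leq_mul2r h1 orbT.
by rewrite mulnAC mulnA leq_mul2r h2 orbT.
Qed.

Lemma chain5 (A B P Q c d : nat) : P * d <= Q * B -> c * B <= d * A ->
  c * P * d <= d * Q * A.
Proof.
move=> h1 h2.
apply: (@leq_trans (c * (Q * B))).
  by rewrite -mulnA leq_mul2l h1 orbT.
by rewrite mulnCA (mulnC d Q) -mulnA leq_mul2l h2 orbT.
Qed.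

Lemma Hl (f : nat -> nat) (pos : forall m, 0 < f m)
  (H : forall m, f m.+1 ^ 2 <= f m * f m.+2) :
  forall m q, f (q + m).+1 * f (q + m) ^ m.+1 <= f q * f (q + m).+1 ^ m.+1.
Proof.
elim=> [|m IH] q; first by rewrite addn0 expn1 mulnC.
have h1 := IH q.+1; have h2 := Ex pos H m q.
rewrite addSn in h1; rewrite addnS.
rewrite (expnS (f (q + m).+1)) (expnS (f (q + m).+2)).
exact: chain4 h1 h2.
Qed.

Lemma Hr (f : nat -> nat) (pos : forall m, 0 < f m)
  (H : forall m, f m.+1 ^ 2 <= f m * f m.+2) :
  forall m q, f q.+1 ^ m.+1 * f q <= f q ^ m.+1 * f (q + m).+1.
Proof.
elim=> [|m IH] q; first by rewrite addn0 expn1 mulnC.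
have h1 := IH q; have h2 := Ex pos H m q.
rewrite addnS (expnS (f q.+1)) (expnS (f q)).
exact: chain5 h1 h2.
Qed.

Lemma expn_leq m n e : m <= n -> m ^ e <= n ^ e.
Proof. by move=> h; elim: e => // e IH; rewrite !expnS leq_mul. Qed.

Lemma chain6 (a b Y Z XN G K : nat) : a * Y <= G * XN -> Z * b <= XN * K ->
  XN * XN <= Y * Z -> (a * b) * (Y * Z) <= (G * K) * (Y * Z).
Proof.
move=> h1 h2 h3.
apply: (@leq_trans ((G * XN) * (XN * K))).
  rewrite mulnACA (mulnC b Z); exact: leq_mul.
have -> : G * XN * (XN * K) = G * K * (XN * XN) by rewrite (mulnC XN K) mulnACA.
by rewrite leq_mul2l h3 orbT.
Qed.

Lemma Conv (f : nat -> nat) (pos : forall m, 0 < f m)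
  (H : forall m, f m.+1 ^ 2 <= f m * f m.+2) :
  forall j D, j <= D -> f j ^ D <= f 0 ^ (D - j) * f D ^ j.
Proof.
move=> j D jD.
case: j jD => [|p] jD; first by rewrite subn0 expn0 muln1.
case: (ltngtP p.+1 D) jD => // [lt _|<- _]; last by rewrite subnn expn0 mul1n.
have [r ->] : exists r, D = (p.+1 + r).+1 by exists (D - p.+2); lia.
have i1 := Hl pos H p 0; rewrite add0n in i1.
have i2 := Hr pos H r p.+1.
have i3 := H p; rewrite expnS expn1 in i3.
have i1' := expn_leq r.+1 i1.
have i2' := expn_leq p.+1 i2.
have i3' := expn_leq (p.+1 * r.+1) i3.
rewrite !expnMn -!expnM in i1' i2' i3'.
have P : 0 < f p ^ (p.+1 * r.+1) * f p.+2 ^ (p.+1 * r.+1) by rewrite muln_gt0 !expn_gt0 !pos.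
rewrite -(leq_pmul2r P).
have -> : (p.+1 + r).+1 - p.+1 = r.+1 by lia.
rewrite (_ : (p.+1 + r).+1 = r.+1 + p.+1); last by lia.
rewrite expnD.
rewrite (mulnC r.+1) (_ : (p.+1 + r).+1 = r.+1 + p.+1) in i2'; last by lia.
apply: chain6 i1' i2' i3'.
Qed.

Lemma X_S (T : finType) (e : rel T) j v : X e j.+1 v = \sum_u e v u * X e j u.
Proof. by []. Qed.

Lemma X_pos (T : finType) (e : rel T) (sym : symmetric e) u0 v0 (huv : e u0 v0) :
  forall j, 0 < X e j u0 /\ 0 < X e j v0.
Proof.
elim=> [//|j [h1 h2]]; split; rewrite X_S.
  by rewrite (bigD1 v0) //= huv mul1n ltn_addr.
by rewrite (bigD1 u0) //= sym huv mul1n ltn_addr.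
Qed.

Lemma w_pos (T : finType) (e : rel T) (sym : symmetric e) u0 v0 (huv : e u0 v0) j :
  0 < w e j.
Proof. by rewrite w_X (bigD1 u0) //= ltn_addr //; case: (X_pos sym huv j). Qed.

Lemma w_noedge (T : finType) (e : rel T) (h : forall u v, ~~ e u v) j : w e j.+1 = 0.
Proof.
rewrite w_X big1 // => v _; rewrite X_S big1 // => u _.
by rewrite (negbTE (h v u)).
Qed.

Lemma CSw (T : finType) (e : rel T) (sym : symmetric e) a b :
  w e (a + b) ^ 2 <= w e (a + a) * w e (b + b).
Proof.
rewrite !(w_add sym); apply: leq_trans (CS _ _) _.
by rewrite leq_eqVlt; apply/orP; left; apply/eqP; congr (_ * _);
  apply: eq_bigr => v _; rewrite expnS expn1.
Qed.

Lemma Bnd (T : finType) (e : rel T) (sym : symmetric e) u0 v0 (huv : e u0 v0) d a :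
  a <= d + d -> w e a ^ (d + d) <= w e 0 ^ (d + d - a) * w e (d + d) ^ a.
Proof.
pose f m := w e (m + m).
have pos : forall m, 0 < f m by move=> m; exact: (w_pos sym huv (m + m)).
have H : forall m, f m.+1 ^ 2 <= f m * f m.+2.
  move=> m; rewrite /f (_ : m.+1 + m.+1 = m + m.+2); last by lia.
  exact: CSw.
have C := Conv pos H.
have [m [->|->]] : exists m, a = m + m \/ a = (m + m).+1.
  elim: a => [|a [m [->|->]]]; first by exists 0; left.
    by exists m; right.
  by exists m.+1; left; lia.
  move=> le; have := C m d (ltac:(lia)); rewrite /f /= => Cm.
  rewrite (_ : d + d - (m + m) = (d - m) + (d - m)); last by lia.
  rewrite !expnD mulnACA; exact: leq_mul.
move=> le; have C1 := C m d (ltac:(lia)); have C2 := C m.+1 d (ltac:(lia)).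
rewrite /f /= in C1 C2.
rewrite (_ : d + d - (m + m).+1 = (d - m) + (d - m.+1)); last by lia.
rewrite (_ : (m + m).+1 = m + m.+1); last by lia.
rewrite [X in X <= _](_ : _ ^ (d + d) = (w e (m + m.+1) ^ 2) ^ d); last by rewrite -expnM mul2n addnn.
rewrite !expnD mulnACA.
apply: leq_trans (expn_leq d (CSw sym m m.+1)) _.
rewrite expnMn; exact: leq_mul.
Qed.

Theorem theorem1 (k d : nat) (alpha : 'I_k -> nat) (T : finType) (e : rel T) :
  1 <= k ->
  \sum_(i < k) alpha i = 2 * d ->
  simple_graph e ->
  \prod_(i < k) w e (alpha i) <= (w e 0) ^ (k - 1) * w e (2 * d).
Proof.
move=> k1 hsum [sym _].
rewrite mul2n -addnn in hsum *.
have ai_le : forall i, alpha i <= d + d.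
  by move=> i; rewrite -hsum (bigD1 i) //= leq_addr.
case: d hsum ai_le => [|d] hsum ai_le.
  rewrite (eq_bigr (fun _ => w e 0)); last first.
    by move=> i _; have := ai_le i; rewrite leqn0 => /eqP ->.
  by rewrite prod_nat_const card_ord -expnSr subn1 prednK.
set N := d.+1 + d.+1.
have N0 : 0 < N by [].
case: (boolP [exists u, [exists v, e u v]]) => [/existsP [u0 /existsP [v0 huv]] | /existsPn noe].
  rewrite -(leq_exp2r _ _ N0).
  rewrite (big_morph (fun x => x ^ N) (fun x y => expnMn x y N) (exp1n N)).
  apply: leq_trans (leq_prod (fun i _ => Bnd sym huv (ai_le i))) _.
  rewrite big_split /= -!expn_sum hsum expnMn -expnM.
  have -> : \sum_(i < k) (N - alpha i) = (k - 1) * N.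
    have S : \sum_(i < k) (N - alpha i) + \sum_(i < k) alpha i = k * N.
      rewrite -big_split /= (eq_bigr (fun _ => N)); last by move=> i _; rewrite subnK.
      by rewrite sum_nat_const card_ord.
    rewrite hsum in S; rewrite mulnBl mul1n.
    move: S; set S1 := \sum_(i < k) _; set KN := k * N; lia.
  by [].
have h : forall u v, ~~ e u v by move=> u v; move/existsPn: (noe u) => /(_ v).
case: (pickP (fun i => 0 < alpha i)) => [i hi | none].
  rewrite (bigD1 i) //=.
  have -> : w e (alpha i) = 0 by case: (alpha i) hi => // n _; exact: w_noedge h n.
  by [].
have : \sum_(i < k) alpha i = 0 by rewrite big1 // => i _; move: (none i) => /= /negbT; rewrite lt0n negbK => /eqP.
by rewrite hsum.
Qed.
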